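(* Let $G$ be a finite undirected weighted graph on $V=\{1,\dots,n\}$ with symmetric nonnegative weights $w(ij)=w(ji)\ge 0$, degrees $d_i=\sum_{j=1}^n w(ij)$ with $\mathrm{vol}(V)=\sum_i d_i>0$, and a positive vertex measure $\mu_1,\dots,\mu_n>0$. Let $M$ be the normalized modularity matrix $M_{ij}=\frac{1}{\mu_i}\big(w(ij)-\frac{d_id_j}{\mathrm{vol}(V)}\big)$, let $\lambda_1(M)$ be its largest eigenvalue, and let $r_M(x)=\langle x,Mx\rangle_\mu/\|x\|_{2,\mu}^2$ for $x\neq 0$. Assume $\lambda_1(M)>0$. Then: (i) for every $A\subseteq V$, $r_M(\mathbb 1_A-\mathbb 1_{\overline A})=2\,q(A)$; (ii) for every $A\subseteq V$ with $\emptyset\neq A\neq V$, $r_M\big(\mathbb 1_A-\tfrac{\mu(A)}{\mu(V)}\mathbb 1\big)=q_\mu(A)$; (iii) $\max_{x\neq 0,\ \langle x,\mathbb 1\rangle_\mu=0} r_M(x)=\max_{x\neq 0} r_M(x)=\lambda_1(M)$. In this sense $r_M$ is a (linear) relaxation of both $q$ and $q_\mu$.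
   Context: $\langle x,y\rangle_\mu=\sum_i\mu_ix_iy_i$, $\|x\|_{2,\mu}^2=\langle x,x\rangle_\mu$; $M$ is self-adjoint for $\langle\cdot,\cdot\rangle_\mu$, so its eigenvalues are real. $\mathbb 1$ is the all-ones vector, $\mathbb 1_A$ the indicator vector of $A$, $\overline A=V\setminus A$, $\mu(A)=\sum_{i\in A}\mu_i$, $\mathrm{vol}(A)=\sum_{i\in A}d_i$. Modularity of $A$: $Q(A)=\sum_{i,j\in A}w(ij)-\mathrm{vol}(A)^2/\mathrm{vol}(V)$. Modularity set function $q(A)=\frac{2}{\mu(V)}Q(A)$ and normalized modularity $q_\mu(A)=\mu(V)\frac{Q(A)}{\mu(A)\mu(\overline A)}$ (for $\emptyset\ne A\ne V$). *)

(* Defs.v *)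
From HB Require Import structures.
From mathcomp Require Import all_boot all_order all_algebra.
From mathcomp Require Import reals.
Set Implicit Arguments. Unset Strict Implicit. Unset Printing Implicit Defensive.
Import Order.TTheory GRing.Theory Num.Theory.
Local Open Scope ring_scope.

Section Modularity.
Variables (R : realType) (n : nat).
Variables (w : 'I_n -> 'I_n -> R) (mu : 'I_n -> R).

Definition deg (i : 'I_n) : R := \sum_(j < n) w i j.
Definition vol (A : {set 'I_n}) : R := \sum_(i in A) deg i.
Definition musum (A : {set 'I_n}) : R := \sum_(i in A) mu i.

Definition modmx : 'M[R]_n :=
  \matrix_(i, j) ((w i j - deg i * deg j / vol setT) / mu i).

Definition mudot (x y : 'cV[R]_n) : R := \sum_(i < n) mu i * x i 0 * y i 0.

Definition rayleigh (x : 'cV[R]_n) : R := mudot x (modmx *m x) / mudot x x.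

Definition indic (A : {set 'I_n}) : 'cV[R]_n :=
  \col_i (if i \in A then 1 else 0).
Definition ones : 'cV[R]_n := \col_i 1.

Definition Qmod (A : {set 'I_n}) : R :=
  \sum_(i in A) \sum_(j in A) w i j - vol A ^+ 2 / vol setT.
Definition qmod (A : {set 'I_n}) : R := 2 / musum setT * Qmod A.
Definition qmu (A : {set 'I_n}) : R :=
  musum setT * Qmod A / (musum A * musum (~: A)).

End Modularity.

Definition largest_eigenvalue (R : realType) (n : nat) (M : 'M[R]_n) (lam : R) :=
  eigenvalue M lam /\ (forall b : R, eigenvalue M b -> b <= lam).

Definition is_max_over (T : Type) (R : realType) (P : T -> Prop) (f : T -> R) (v : R) :=
  (exists2 x, P x & f x = v) /\ (forall x, P x -> f x <= v).

(* Main.v *)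
Require Import Defs.
From HB Require Import structures.
From mathcomp Require Import all_boot all_order all_algebra.
From mathcomp Require Import reals.
From mathcomp Require Import complex.
From mathcomp Require Import ring lra.
Import Order.TTheory GRing.Theory Num.Theory.
Local Open Scope ring_scope.
Set Implicit Arguments. Unset Strict Implicit. Unset Printing Implicit Defensive.

Local Open Scope sesquilinear_scope.
Section Key.
Variable R : rcfType.
Local Notation C := (R[i]).
Local Notation f := (real_complex R).

Lemma conj_f (x : R) : (f x)^* = f x.
Proof. by apply: conj_Creal; rewrite complex_real. Qed.

Lemma key_sym n (S : 'M[R]_n) : S^T = S -> (0 < n)%N ->
  exists r, eigenvalue S r /\
    forall x : 'rV[R]_n, (x *m S *m x^T) 0 0 <= r * (x *m x^T) 0 0.
Proof.
move=> Ssym n_gt0.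
set Sc := map_mx f S.
have Sh : Sc \is hermsymmx.
  apply: realsym_hermsym.
    by apply/is_hermitianmxP; rewrite expr0 scale1r map_mx_id // /Sc map_trmx Ssym.
  by apply/mxOverP => i j; rewrite mxE complex_real.
set P := spectralmx Sc; set d := spectral_diag Sc.
have PU : P \is unitarymx := spectral_unitarymx Sc.
have Se : Sc = invmx P *m diag_mx d *m P.
  exact/orthomx_spectralP/hermitian_normalmx.
have dR : d \is a realmx := hermitian_spectral_diag_real Sh.
rewrite (invmx_unitary PU) in Se.
have [k _ kmax] := @arg_maxP _ R _ (Ordinal n_gt0) xpredT
   (fun i => complex.Re (d 0 i)) isT.
have dreal i : d 0 i = f (complex.Re (d 0 i)).
  by apply/esym/RRe_real; apply: (mxOverP dR).
have kmax' : forall i, d 0 i <= f (complex.Re (d 0 k)).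
  by move=> i; rewrite [d 0 i]dreal lecR; apply: kmax.
have PPt : P *m P^t* = 1%:M by apply/unitarymxP.
exists (complex.Re (d 0 k)); split.
  have E : eigenvalue Sc (d 0 k).
    apply/eigenvalueP; exists (row k P).
      rewrite !rowE Se !mulmxA -(mulmxA _ P) PPt mulmx1 scalemxAl; congr (_ *m P); apply/rowP => j; rewrite mul_mx_diag !mxE eqxx /=; case: eqP => [->|_]; rewrite ?mulr1 ?mul1r ?mul0r ?mulr0 //.
    apply/eqP => /(congr1 (fun v => v *m P^t*)); rewrite -row_mul PPt mul0mx.
    move/matrixP => /(_ 0 k); rewrite !mxE eqxx /=.
    by move/eqP; rewrite oner_eq0.
  by move: E; rewrite (dreal k) !eigenvalue_root_char /Sc -map_char_poly fmorph_root.
move=> x; rewrite -lecR.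
set xc := map_mx f x.
have hT : xc^t* = map_mx f x^T.
  by apply/matrixP => i j; rewrite !mxE conj_f.
have -> : f ((x *m S *m x^T) 0 0) = (xc *m Sc *m xc^t*) 0 0.
  rewrite hT /Sc /xc -!map_mxM. rewrite [RHS]mxE. by [].
have -> : f (complex.Re (d 0 k) * (x *m x^T) 0 0)
     = f (complex.Re (d 0 k)) * (xc *m xc^t*) 0 0.
  rewrite rmorphM hT /xc -!map_mxM. congr (_ * _). rewrite [RHS]mxE. by [].
have PtP : P^t* *m P = 1%:M.
  by rewrite -(invmx_unitary PU) mulVmx // unitarymx_unit.
set y := xc *m P^t*.
have hy : y^t* = P *m xc^t*.
  by rewrite /y trmx_mul map_mxM trmxCK.
have -> : xc *m Sc *m xc^t* = y *m diag_mx d *m y^t*.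
  by rewrite hy Se /y !mulmxA.
have -> : xc *m xc^t* = y *m y^t*.
  by rewrite hy /y !mulmxA -(mulmxA xc) PtP mulmx1.
rewrite mul_mx_diag !mxE big_distrr /=; apply: ler_sum => j _.
rewrite !mxE mulrAC [X in _ <= X]mulrC; apply: ler_wpM2l; [exact: mul_conjC_ge0 | exact: kmax'].
Qed.
End Key.

Local Close Scope sesquilinear_scope.

Section Main.
Variables (R : realType) (n : nat).
Variables (w : 'I_n -> 'I_n -> R) (mu : 'I_n -> R).
Hypothesis w_sym : forall i j, w i j = w j i.
Hypothesis vol_gt0 : 0 < vol w setT.
Hypothesis mu_gt0 : forall i, 0 < mu i.

Let V := vol w setT.
Definition Bm i j := w i j - deg w i * deg w j / V.

Lemma Bm_sym i j : Bm i j = Bm j i.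
Proof. by rewrite /Bm w_sym (mulrC (deg w i)). Qed.

Lemma volE : V = \sum_i deg w i.
Proof. by rewrite /V /vol; apply: eq_bigl => i; rewrite in_setT. Qed.

Lemma rowsum i : \sum_j Bm i j = 0.
Proof.
rewrite /Bm sumrB -/(deg w i) -mulr_suml -mulr_sumr -volE mulfK ?subrr //.
by rewrite gt_eqF.
Qed.

Lemma colsum j : \sum_i Bm i j = 0.
Proof. by rewrite -[RHS](rowsum j); apply: eq_bigr => i _; rewrite Bm_sym. Qed.

Definition quadf (g : 'I_n -> R) := \sum_i \sum_j g i * Bm i j * g j.

Lemma quadf_eq g h : (forall i, g i = h i) -> quadf g = quadf h.
Proof.
move=> e; apply: eq_bigr => i _; apply: eq_bigr => j _; by rewrite !e.
Qed.

Lemma quadf_alt g : quadf g = \sum_i g i * \sum_j Bm i j * g j.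
Proof.
apply: eq_bigr => i _; rewrite mulr_sumr; apply: eq_bigr => j _; by rewrite mulrA.
Qed.

Lemma quadf_shift g c : quadf (fun i => g i + c) = quadf g.
Proof.
have inner i : \sum_j (g i + c) * Bm i j * (g j + c)
    = (g i + c) * \sum_j Bm i j * g j.
  transitivity (\sum_j (g i + c) * (Bm i j * g j + c * Bm i j)).
    by apply: eq_bigr => j _; ring.
  by rewrite -mulr_sumr big_split /= -mulr_sumr rowsum mulr0 addr0.
rewrite /quadf (eq_bigr _ (fun i _ => inner i)) -/(quadf g) quadf_alt.
under eq_bigr do rewrite mulrDl.
rewrite big_split /= -mulr_sumr exchange_big /=.
have -> : \sum_j \sum_i Bm i j * g j = 0.
  by rewrite big1 // => j _; rewrite -mulr_suml colsum mul0r.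
by rewrite mulr0 addr0.
Qed.

Lemma quadf_scale g a : quadf (fun i => a * g i) = a ^+ 2 * quadf g.
Proof.
rewrite /quadf mulr_sumr; apply: eq_bigr => i _; rewrite mulr_sumr.
by apply: eq_bigr => j _; ring.
Qed.

Lemma quadf_indic (A : {set 'I_n}) :
  quadf (fun i => (i \in A)%:R) = Qmod w A.
Proof.
rewrite /quadf /Qmod.
transitivity (\sum_(i in A) \sum_(j in A) Bm i j).
  rewrite [RHS]big_mkcond; apply: eq_bigr => i _; rewrite [in RHS]big_mkcond /=.
  case: (i \in A) => /=.
    by apply: eq_bigr => j _; case: (j \in A); rewrite /= ?mulr1n ?mulr0n ?mul1r ?mulr1 ?mulr0.
  by rewrite big1 // => j _; rewrite mulr0n !mul0r.
rewrite /Bm; under eq_bigr do rewrite sumrB; rewrite sumrB; congr (_ - _).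
rewrite expr2 /vol big_distrl /= big_distrl /=; apply: eq_bigr => i _.
by rewrite big_distrr /= big_distrl /=.
Qed.

Lemma mu_neq0 i : mu i != 0.
Proof. by rewrite gt_eqF. Qed.

Lemma V_neq0 : V != 0.
Proof. by rewrite gt_eqF. Qed.

Lemma quadE x : mudot mu x (modmx w mu *m x) = quadf (fun i => x i 0).
Proof.
apply: eq_bigr => i _; rewrite mxE mulr_sumr; apply: eq_bigr => j _.
rewrite mxE /Bm -/V; field; by rewrite V_neq0 mu_neq0.
Qed.

Lemma normE x : mudot mu x x = \sum_i mu i * x i 0 ^+ 2.
Proof. by apply: eq_bigr => i _; rewrite expr2 mulrA. Qed.

Lemma norm_ge0 x : 0 <= mudot mu x x.
Proof.
rewrite normE; apply: sumr_ge0 => i _; apply: mulr_ge0; [exact: ltW | exact: sqr_ge0].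
Qed.

Lemma norm_gt0 x : x != 0 -> 0 < mudot mu x x.
Proof.
move=> xnz.
have [i Hi] : exists i, x i 0 != 0.
  apply/existsP; apply: contraNT xnz; rewrite negb_exists => /forallP H.
  apply/eqP/matrixP => i j; rewrite ord1 mxE; exact/eqP/negbNE/H.
rewrite normE (bigD1 i) //=.
have h1 : 0 < mu i * x i 0 ^+ 2.
  by apply: mulr_gt0 => //; rewrite exprn_even_gt0 // Hi orbT.
have h2 : 0 <= \sum_(j < n | j != i) mu j * x j 0 ^+ 2.
  apply: sumr_ge0 => j _; apply: mulr_ge0; [exact: ltW | exact: sqr_ge0].
lra.
Qed.

Lemma Msum0 (x : 'cV[R]_n) : \sum_i mu i * (modmx w mu *m x) i 0 = 0.
Proof.
transitivity (\sum_i \sum_j Bm i j * x j 0).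
  apply: eq_bigr => i _; rewrite mxE mulr_sumr; apply: eq_bigr => j _.
  rewrite mxE /Bm -/V; field; by rewrite V_neq0 mu_neq0.
rewrite exchange_big /= big1 // => j _; by rewrite -mulr_suml colsum mul0r.
Qed.

Lemma musum_gt0 (A : {set 'I_n}) : A != set0 -> 0 < musum mu A.
Proof.
move=> /set0Pn [i iA]; rewrite /musum (bigD1 i) //=.
have h1 := mu_gt0 i.
have h2 : 0 <= \sum_(j in A | j != i) mu j.
  by apply: sumr_ge0 => j _; apply: ltW.
lra.
Qed.

Lemma musumT_gt0 : (0 < n)%N -> 0 < musum mu setT.
Proof.
move=> n_gt0; apply: musum_gt0; apply/set0Pn; exists (Ordinal n_gt0); by rewrite in_setT.
Qed.

Lemma part1 (A : {set 'I_n}) : (0 < n)%N ->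
  rayleigh w mu (indic R A - indic R (~: A)) = 2 * qmod w mu A.
Proof.
move=> n_gt0.
rewrite /rayleigh quadE.
rewrite (@quadf_eq _ (fun i => 2 * (i \in A)%:R + -1)); last first.
  by move=> i; rewrite !mxE in_setC; case: (i \in A) => /=; rewrite ?mulr1n ?mulr0n; ring.
rewrite quadf_shift quadf_scale quadf_indic.
have -> : mudot mu (indic R A - indic R (~: A)) (indic R A - indic R (~: A))
    = musum mu setT.
  rewrite normE /musum; symmetry; rewrite (eq_bigl xpredT); last by move=> i; rewrite in_setT.
  apply: eq_bigr => i _; rewrite !mxE in_setC; case: (i \in A) => /=; ring.
have := musumT_gt0 n_gt0; move=> hm.
rewrite /qmod; field; by rewrite gt_eqF.
Qed.

Lemma part2 (A : {set 'I_n}) : A != set0 -> A != setT ->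
  rayleigh w mu (indic R A - (musum mu A / musum mu setT) *: ones R n)
    = qmu w mu A.
Proof.
move=> hA0 hAT.
have hAc : ~: A != set0.
  by apply: contraNneq hAT => h; rewrite -(setCK A) h setC0.
have mA := musum_gt0 hA0; have mAc := musum_gt0 hAc.
have hT : musum mu setT = musum mu A + musum mu (~: A).
  rewrite /musum (eq_bigl xpredT); last by move=> i; rewrite in_setT.
  rewrite (bigID (fun i => i \in A)) /=; congr (_ + _).
  by apply: eq_bigl => i; rewrite in_setC.
set c := musum mu A / musum mu setT.
rewrite /rayleigh quadE.
rewrite (@quadf_eq _ (fun i => (i \in A)%:R + - c)); last first.
  by move=> i; rewrite !mxE mulr1; case: (i \in A).
rewrite quadf_shift quadf_indic.
have -> : mudot mu (indic R A - c *: ones R n) (indic R A - c *: ones R n)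
    = musum mu A * (1 - c) ^+ 2 + musum mu (~: A) * c ^+ 2.
  rewrite normE (bigID (fun i => i \in A)) /=; congr (_ + _).
    rewrite /musum mulr_suml; apply: eq_bigr => i iA.
    by rewrite !mxE iA mulr1.
  rewrite /musum mulr_suml; apply: eq_big => [i|i iA]; first by rewrite in_setC.
  rewrite !mxE (negbTE iA) mulr1; congr (_ * _); ring.
rewrite /qmu hT /c hT.
set a := musum mu A; set b := musum mu (~: A).
have ha : 0 < a by []. have hb : 0 < b by [].
have hn : a * (1 - a / (a + b)) ^+ 2 + b * (a / (a + b)) ^+ 2 = a * b / (a + b).
  field; rewrite gt_eqF //; lra.
rewrite hn; field; rewrite !gt_eqF //; lra.
Qed.

Definition sq i := Num.sqrt (mu i).
Lemma sq_gt0 i : 0 < sq i. Proof. by rewrite sqrtr_gt0. Qed.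
Lemma sq_neq0 i : sq i != 0. Proof. by rewrite gt_eqF // sq_gt0. Qed.
Lemma sq_sqr i : sq i ^+ 2 = mu i. Proof. by rewrite sqr_sqrtr // ltW. Qed.

Definition Smx : 'M[R]_n := \matrix_(i, j) (Bm i j / (sq i * sq j)).

Lemma Smx_sym : Smx^T = Smx.
Proof. by apply/matrixP => i j; rewrite !mxE Bm_sym (mulrC (sq j)). Qed.

Definition zvec (x : 'cV[R]_n) : 'rV[R]_n := \row_i (sq i * x i 0).

Lemma quad_S x : (zvec x *m Smx *m (zvec x)^T) 0 0 = quadf (fun i => x i 0).
Proof.
rewrite /quadf exchange_big /= mxE; apply: eq_bigr => j _.
rewrite !mxE mulr_suml; apply: eq_bigr => i _; rewrite !mxE.
have := sq_neq0 i; have := sq_neq0 j; move=> *; field; by rewrite sq_neq0 sq_neq0.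
Qed.

Lemma norm_S x : (zvec x *m (zvec x)^T) 0 0 = mudot mu x x.
Proof.
rewrite normE mxE; apply: eq_bigr => i _; rewrite !mxE -sq_sqr; ring.
Qed.

Lemma eig_transfer r : eigenvalue Smx r -> eigenvalue (modmx w mu) r.
Proof.
move=> /eigenvalueP [v Hv vnz]; apply/eigenvalueP.
exists (\row_j (v 0 j * sq j)).
  apply/rowP => j; have := congr1 (fun A : 'rV[R]_n => A 0 j) Hv; rewrite !mxE => H.
  transitivity (sq j * \sum_i v 0 i * Smx i j).
    rewrite mulr_sumr; apply: eq_bigr => i _; rewrite /Smx !mxE -(sq_sqr i) /Bm -/V.
    field; by rewrite !sq_neq0 V_neq0.
  rewrite H; ring.
apply: contraNneq vnz => hu; apply/eqP/rowP => j.
have := congr1 (fun A : 'rV[R]_n => A 0 j) hu; rewrite !mxE => /eqP.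
by rewrite mulf_eq0 (negbTE (sq_neq0 j)) orbF => /eqP.
Qed.

Lemma rayleigh_le r :
  (forall z : 'rV[R]_n, (z *m Smx *m z^T) 0 0 <= r * (z *m z^T) 0 0) ->
  forall x, x != 0 -> rayleigh w mu x <= r.
Proof.
move=> bnd x xnz; rewrite /rayleigh quadE ler_pdivrMr ?norm_gt0 //.
by have := bnd (zvec x); rewrite quad_S norm_S.
Qed.

Lemma eig_vec lam : eigenvalue (modmx w mu) lam ->
  exists2 x : 'cV[R]_n, x != 0 & modmx w mu *m x = lam *: x.
Proof.
move=> /eigenvalueP [v Hv vnz].
exists (\col_i (v 0 i / mu i)).
  apply: contraNneq vnz => hx; apply/eqP/rowP => j.
  have := congr1 (fun A : 'cV[R]_n => A j 0) hx; rewrite !mxE => /eqP.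
  by rewrite mulf_eq0 invr_eq0 (negbTE (mu_neq0 j)) orbF => /eqP.
apply/colP => i; have := congr1 (fun A : 'rV[R]_n => A 0 i) Hv; rewrite !mxE => H.
transitivity ((\sum_j v 0 j * modmx w mu j i) / mu i).
  rewrite mulr_suml; apply: eq_bigr => j _; rewrite /modmx !mxE w_sym (mulrC (deg w j)).
  field; by rewrite !mu_neq0 V_neq0.
by rewrite H mulrA.
Qed.

End Main.

Theorem proposition2p2 (R : realType) (n : nat)
    (w : 'I_n -> 'I_n -> R) (mu : 'I_n -> R)
    (w_sym : forall i j, w i j = w j i)
    (w_ge0 : forall i j, 0 <= w i j)
    (vol_gt0 : 0 < vol w setT)
    (mu_gt0 : forall i, 0 < mu i)
    (lam : R)
    (lam_max : largest_eigenvalue (modmx w mu) lam)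
    (lam_gt0 : 0 < lam) :
  (forall A : {set 'I_n},
     rayleigh w mu (indic R A - indic R (~: A)) = 2 * qmod w mu A) /\
  (forall A : {set 'I_n}, A != set0 -> A != setT ->
     rayleigh w mu (indic R A - (musum mu A / musum mu setT) *: ones R n)
       = qmu w mu A) /\
  is_max_over (fun x : 'cV[R]_n => x != 0 /\ mudot mu x (ones R n) = 0)
      (rayleigh w mu) lam /\
  is_max_over (fun x : 'cV[R]_n => x != 0) (rayleigh w mu) lam.
Proof.
have n_gt0 : (0 < n)%N.
  case: (posnP n) => // n0; move: vol_gt0; rewrite /vol big1 ?ltxx // => i _.
  by exfalso; case: i => k; rewrite n0.
have [r [eigS bnd]] := key_sym (Smx_sym mu w_sym) n_gt0.
have rlam : r <= lam := lam_max.2 _ (eig_transfer vol_gt0 mu_gt0 eigS).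
have le x : x != 0 -> rayleigh w mu x <= lam.
  move=> xnz; apply: le_trans rlam; exact: (rayleigh_le vol_gt0 mu_gt0 bnd xnz).
have [x xnz Mx] := eig_vec w_sym vol_gt0 mu_gt0 lam_max.1.
have rx : rayleigh w mu x = lam.
  rewrite /rayleigh Mx.
  have -> : mudot mu x (lam *: x) = lam * mudot mu x x.
    rewrite /mudot mulr_sumr; apply: eq_bigr => i _; rewrite !mxE; ring.
  by rewrite mulfK // gt_eqF // (norm_gt0 mu_gt0).
have ox : mudot mu x (ones R n) = 0.
  have := Msum0 w_sym vol_gt0 mu_gt0 x; rewrite Mx.
  have -> : \sum_i mu i * (lam *: x) i 0 = lam * mudot mu x (ones R n).
    rewrite /mudot mulr_sumr; apply: eq_bigr => i _; rewrite !mxE; ring.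
  by move/eqP; rewrite mulf_eq0 (gt_eqF lam_gt0) => /eqP.
split; first by move=> A; apply: part1.
split; first by move=> A; apply: part2.
split; split.
- by exists x.
- by move=> y [ynz _]; apply: le.
- by exists x.
- by move=> y ynz; apply: le.
Qed.
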